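(* Let $\mathfrak g=\mathfrak g(\mathfrak l,V,\mathfrak z,\beta)$ be admissible such that the representation of $\mathfrak l$ on $V$ is faithful. For every pointed closed convex cone $C_{\mathfrak z}\subseteq\mathfrak z$, the set $$W_{\mathfrak l}(C_{\mathfrak z})=\{x\in\mathfrak l:\ \forall v\in V:\ [v,[v,x]]\in C_{\mathfrak z}\}$$ is a pointed $\operatorname{Inn}(\mathfrak l)$-invariant closed convex cone in $\mathfrak l$.
   Context: In $\mathfrak g(\mathfrak l,V,\mathfrak z,\beta)=\mathfrak z\oplus V\oplus\mathfrak l$ the bracket is $[(z,v,x),(z',v',x')]=(\beta(v,v'),x.v'-x'.v,[x,x'])$, so for $v\in V$, $x\in\mathfrak l$: $[v,[v,x]]=\beta(x.v,v)$. Here $\mathfrak l$ is reductive, $V$ an $\mathfrak l$-module, $\beta$ skew-symmetric and $\mathfrak l$-invariant. $\mathfrak g$ is admissible if it contains an $\operatorname{Inn}(\mathfrak g)$-invariant pointed (no affine lines) generating (spanning) closed convex subset; standing fact: then $\mathfrak z=\mathfrak z(\mathfrak g)$ and there exist $f\in\mathfrak z^*$, $y\in\mathfrak l$ with $f\circ\beta$ symplectic and $v\mapsto f(\beta(y.v,v))$ positive definite (in particular for each $0\ne v\in V$ there is $w$ with $\beta(v,w)\ne0$). *)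

(* Defs.v *)
From HB Require Import structures.
From mathcomp Require Import all_boot all_order all_algebra.
From mathcomp Require Import all_classical all_reals all_analysis.

Set Implicit Arguments.
Unset Strict Implicit.
Unset Printing Implicit Defensive.

Import Order.TTheory GRing.Theory Num.Theory.
Import numFieldNormedType.Exports.
Local Open Scope classical_set_scope.
Local Open Scope ring_scope.

(* Finite-dimensional real vector spaces are modelled by coordinate spaces
   'rV[R]_n; linear maps act on row vectors on the right (u *m M). *)

Section Defs.
Variable R : realType.

Definition bilinear_map (n m k : nat)
  (f : 'rV[R]_n -> 'rV[R]_m -> 'rV[R]_k) : Prop :=
  (forall (a : R) u u' w, f (a *: u + u') w = a *: f u w + f u' w) /\
  (forall (a : R) u w w', f u (a *: w + w') = a *: f u w + f u w').

Definition is_lie_bracket (n : nat) (br : 'rV[R]_n -> 'rV[R]_n -> 'rV[R]_n)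
  : Prop :=
  [/\ bilinear_map br,
      (forall x, br x x = 0) &
      (forall x y z, br x (br y z) + br y (br z x) + br z (br x y) = 0)].

Definition is_subspace (n : nat) (S : set 'rV[R]_n) : Prop :=
  [/\ S 0, (forall u v, S u -> S v -> S (u + v)) &
      (forall (a : R) u, S u -> S (a *: u))].

Definition is_ideal (n : nat) (br : 'rV[R]_n -> 'rV[R]_n -> 'rV[R]_n)
  (I : set 'rV[R]_n) : Prop :=
  is_subspace I /\ (forall x y, I y -> I (br x y)).

(* reductive: the adjoint representation is semisimple, i.e. every ideal
   has a complementary ideal (Bourbaki's definition). *)
Definition reductive (n : nat) (br : 'rV[R]_n -> 'rV[R]_n -> 'rV[R]_n)
  : Prop :=
  is_lie_bracket br /\
  forall I, is_ideal br I ->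
    exists J, [/\ is_ideal br J,
                  (forall u, I u -> J u -> u = 0) &
                  (forall u, exists a b, [/\ I a, J b & u = a + b])].

Definition is_lie_module (n m : nat) (br : 'rV[R]_n -> 'rV[R]_n -> 'rV[R]_n)
  (act : 'rV[R]_n -> 'rV[R]_m -> 'rV[R]_m) : Prop :=
  bilinear_map act /\
  (forall x y v, act (br x y) v = act x (act y v) - act y (act x v)).

Definition faithful (n m : nat) (act : 'rV[R]_n -> 'rV[R]_m -> 'rV[R]_m)
  : Prop := forall x, (forall v, act x v = 0) -> x = 0.

Definition is_invariant_skew (n m k : nat)
  (act : 'rV[R]_n -> 'rV[R]_m -> 'rV[R]_m)
  (beta : 'rV[R]_m -> 'rV[R]_m -> 'rV[R]_k) : Prop :=
  [/\ bilinear_map beta,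
      (forall v w, beta v w = - beta w v) &
      (forall x v w, beta (act x v) w + beta v (act x w) = 0)].

Definition expmx (N : nat) (A : 'M[R]_N) : 'M[R]_N :=
  limn (fun p => \sum_(0 <= k < p) ((k`!)%:R^-1 *: A ^+ k)).

(* ad x as a matrix acting on row vectors: u *m ad br x = br x u *)
Definition ad (N : nat) (br : 'rV[R]_N -> 'rV[R]_N -> 'rV[R]_N)
  (x : 'rV[R]_N) : 'M[R]_N := lin1_mx (br x).

Inductive Inn (N : nat) (br : 'rV[R]_N -> 'rV[R]_N -> 'rV[R]_N)
  : 'M[R]_N -> Prop :=
  | Inn1 : Inn br 1%:M
  | InnExp : forall g x, Inn br g -> Inn br (g *m expmx (ad br x))
  | InnExpV : forall g x, Inn br g -> Inn br (g *m invmx (expmx (ad br x))).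

Definition Inn_invariant (N : nat) (br : 'rV[R]_N -> 'rV[R]_N -> 'rV[R]_N)
  (C : set 'rV[R]_N) : Prop :=
  forall g u, Inn br g -> C u -> C (u *m g).

Definition convex_set (N : nat) (C : set 'rV[R]_N) : Prop :=
  forall u v (t : R), C u -> C v -> 0 <= t -> t <= 1 ->
    C (t *: u + (1 - t) *: v).

(* pointed convex set: contains no affine line *)
Definition no_affine_line (N : nat) (C : set 'rV[R]_N) : Prop :=
  forall u d, (forall t : R, C (u + t *: d)) -> d = 0.

Definition spanning (N : nat) (C : set 'rV[R]_N) : Prop :=
  forall w, exists s : seq (R * 'rV[R]_N),
    (forall p, p \in s -> C p.2) /\ w = \sum_(p <- s) p.1 *: p.2.

Definition convex_cone (N : nat) (C : set 'rV[R]_N) : Prop :=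
  [/\ C 0, (forall u v, C u -> C v -> C (u + v)) &
      (forall (a : R) u, 0 <= a -> C u -> C (a *: u))].

Definition pointed_cone (N : nat) (C : set 'rV[R]_N) : Prop :=
  forall u, C u -> C (- u) -> u = 0.

Section G.
Variables (n m k : nat).
Variable br : 'rV[R]_n -> 'rV[R]_n -> 'rV[R]_n.
Variable act : 'rV[R]_n -> 'rV[R]_m -> 'rV[R]_m.
Variable beta : 'rV[R]_m -> 'rV[R]_m -> 'rV[R]_k.

Definition gz (X : 'rV[R]_(k + (m + n))) : 'rV[R]_k := lsubmx X.
Definition gV (X : 'rV[R]_(k + (m + n))) : 'rV[R]_m := lsubmx (rsubmx X).
Definition gl (X : 'rV[R]_(k + (m + n))) : 'rV[R]_n := rsubmx (rsubmx X).

Definition gtriple (z : 'rV[R]_k) (v : 'rV[R]_m) (x : 'rV[R]_n)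
  : 'rV[R]_(k + (m + n)) := row_mx z (row_mx v x).

Definition gbr (X Y : 'rV[R]_(k + (m + n))) : 'rV[R]_(k + (m + n)) :=
  gtriple (beta (gV X) (gV Y))
          (act (gl X) (gV Y) - act (gl Y) (gV X))
          (br (gl X) (gl Y)).

Definition admissible : Prop :=
  exists C : set 'rV[R]_(k + (m + n)),
    [/\ closed C, convex_set C, no_affine_line C, spanning C &
        Inn_invariant gbr C].

Definition W_l (Cz : set 'rV[R]_k) : set 'rV[R]_n :=
  [set x | forall v : 'rV[R]_m,
     exists2 c, Cz c &
       gbr (gtriple 0 v 0) (gbr (gtriple 0 v 0) (gtriple 0 0 x))
       = gtriple c 0 0].
End G.

End Defs.

(* Main.v *)
Require Import Defs.
From HB Require Import structures.
From mathcomp Require Import all_boot all_order all_algebra.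
From mathcomp Require Import all_classical all_reals all_analysis.
From mathcomp Require Import ring lra.
Import Order.TTheory GRing.Theory Num.Theory.
Import numFieldNormedType.Exports.
Local Open Scope classical_set_scope.
Local Open Scope ring_scope.
Set Implicit Arguments. Unset Strict Implicit. Unset Printing Implicit Defensive.
Section A.
Variable R : realType.

Definition lin (U V : lmodType R) (f : U -> V) :=
  forall (a : R) u v, f (a *: u + v) = a *: f u + f v.

Section LinF.
Variables (U V : lmodType R) (f : U -> V) (fl : lin f).
Definition linP : {linear U -> V} := HB.pack f (GRing.isLinear.Build _ _ _ _ f fl).
Lemma lin_sum I (r : seq I) (P : pred I) (F : I -> U) :
  f (\sum_(i <- r | P i) F i) = \sum_(i <- r | P i) f (F i).
Proof. exact: (linear_sum linP). Qed.
Lemma linZ a u : f (a *: u) = a *: f u. Proof. exact: (linearZZ linP). Qed.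
Lemma lin0 : f 0 = 0. Proof. exact: (linear0 linP). Qed.
Lemma linD u v : f (u + v) = f u + f v. Proof. exact: (linearD linP). Qed.
Lemma linN u : f (- u) = - f u. Proof. exact: (linearN linP). Qed.
Lemma linB u v : f (u - v) = f u - f v. Proof. exact: (linearB linP). Qed.
End LinF.

Lemma lin1E n m (f : 'rV[R]_n -> 'rV[R]_m) : lin f -> forall u, u *m lin1_mx f = f u.
Proof. move=> fl u; exact: (mul_rV_lin1 (linP fl)). Qed.

Lemma mx_entry_le (a b : nat) (M : 'M[R]_(a,b)) i j : `|M i j| <= `|M|.
Proof.
rewrite [leRHS]/Num.Def.normr /= mx_normrE; apply/bigmax_geP; right => /=; by exists (i,j).
Qed.

Lemma mx_norm_le (a b : nat) (M : 'M[R]_(a,b)) c :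
  0 <= c -> (forall i j, `|M i j| <= c) -> `|M| <= c.
Proof.
move=> c0 H; rewrite [leLHS]/Num.Def.normr /= mx_normrE; apply/bigmax_leP; split => // -[i j] _ /=; exact: H.
Qed.

Lemma mulmx_norm (a b c : nat) (P : 'M[R]_(a,b)) (Q : 'M[R]_(b,c)) :
  `|P *m Q| <= b%:R * `|P| * `|Q|.
Proof.
apply: mx_norm_le; first by rewrite !mulr_ge0.
move=> i k; rewrite mxE; apply: le_trans (ler_norm_sum _ _ _) _.
apply: le_trans (_ : \sum_(j < b) (`|P| * `|Q|) <= _).
  apply: ler_sum => j _; rewrite normrM; apply: ler_pM => //; exact: mx_entry_le.
by rewrite sumr_const card_ord ?mulr1 -mulrA mulr_natl.
Qed.

Lemma lin_bound (a b : nat) (V : normedModType R) (f : 'M[R]_(a,b) -> V) :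
  lin f -> exists K, 0 <= K /\ forall M, `|f M| <= K * `|M|.
Proof.
move=> fl; exists (\sum_i `|f (delta_mx i.1 i.2)|); split.
  by apply: sumr_ge0 => i _.
move=> M; rewrite {1}(matrix_sum_delta M).
rewrite pair_bigA /= (lin_sum fl) mulr_suml.
apply: le_trans (ler_norm_sum _ _ _) _.
apply: ler_sum => -[i j] _ /=; rewrite (linZ fl) normrZ mulrC.
by apply: ler_wpM2l => //; exact: mx_entry_le.
Qed.

Lemma lin_cont (V W : normedModType R) (f : V -> W) K :
  lin f -> (forall x, `|f x| <= K * `|x|) -> continuous f.
Proof.
move=> fl fb; apply: (@bounded_linear_continuous _ _ _ (linP fl)).
apply/linear_boundedP; near=> r => x /=.
apply: le_trans (fb x) _; apply: ler_wpM2r; first by [].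
near: r; apply: nbhs_pinfty_ge; exact: num_real.
Unshelve. all: by end_near. Qed.

Lemma lin_contM (a b : nat) (V : normedModType R) (f : 'M[R]_(a,b) -> V) :
  lin f -> continuous f.
Proof. by move=> fl; have [K [_ HK]] := lin_bound fl; exact: (lin_cont fl HK). Qed.

Lemma bilin_bound (a b c d : nat) (V : normedModType R)
  (f : 'M[R]_(a,b) -> 'M[R]_(c,d) -> V) :
  (forall Q, lin (f^~ Q)) -> (forall P, lin (f P)) ->
  exists K, 0 <= K /\ forall P Q, `|f P Q| <= K * `|P| * `|Q|.
Proof.
move=> f1 f2.
have H : forall i : 'I_a * 'I_b, exists K, 0 <= K /\ forall Q, `|f (delta_mx i.1 i.2) Q| <= K * `|Q|.
  move=> i; exact: lin_bound.
have [Kf HKf] := choice H.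
exists (\sum_i Kf i); split; first by apply: sumr_ge0 => i _; case: (HKf i).
move=> P Q; rewrite {1}(matrix_sum_delta P) pair_bigA /= (lin_sum (f1 Q)).
rewrite !mulr_suml; apply: le_trans (ler_norm_sum _ _ _) _.
apply: ler_sum => -[i j] _ /=; rewrite (linZ (f1 Q)) normrZ.
have [K0 HK] := HKf (i,j).
apply: le_trans (_ : `|P| * (Kf (i,j) * `|Q|) <= _).
  apply: ler_pM; [by []|by []|exact: mx_entry_le|exact: HK].
by rewrite mulrCA mulrA.
Qed.

End A.
HB.instance Definition mxC (R : realType) N := Complete.on 'M[R]_N.
Section B.
Variable R : realType.

Lemma pow_norm N (A : 'M[R]_N) k : `|A ^+ k| <= (N%:R * `|A|) ^+ k.
Proof.
elim: k => [|k IH].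
  rewrite !expr0; apply: mx_norm_le => // i j; rewrite !mxE.
  by case: (i == j); rewrite ?normr1 ?normr0.
rewrite exprS -mulmxE exprS; apply: le_trans (mulmx_norm _ _) _.
apply: ler_wpM2l IH; by rewrite mulr_ge0.
Qed.

Lemma expmx_cvg N (A : 'M[R]_N) :
  (fun p => \sum_(0 <= k < p) ((k`!)%:R^-1 *: A ^+ k)) @ \oo --> expmx A.
Proof.
set u := fun k => (k`!)%:R^-1 *: A ^+ k.
have cu : cvgn (series u).
  apply: normed_cvg.
  apply: (series_le_cvg _ _ _ (is_cvg_series_exp_coeff (N%:R * `|A|))).
  - by move=> k; exact: normr_ge0.
  - by move=> k; apply: exp_coeff_ge0; rewrite mulr_ge0.
  - move=> k; rewrite /u /exp_coeff /= normrZ mulrC ger0_norm; last by rewrite invr_ge0.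
    by apply: ler_wpM2r; [rewrite invr_ge0|exact: pow_norm].
exact: cu.
Qed.

Lemma expmx_lin N (V : normedModType R) (f : 'M[R]_N -> V) (A : 'M[R]_N) :
  lin f ->
  (fun p => \sum_(0 <= k < p) ((k`!)%:R^-1 *: f (A ^+ k))) @ \oo --> f (expmx A).
Proof.
move=> fl.
have -> : (fun p => \sum_(0 <= k < p) ((k`!)%:R^-1 *: f (A ^+ k))) =
   f \o (fun p => \sum_(0 <= k < p) ((k`!)%:R^-1 *: A ^+ k)).
  apply: funext => p /=; rewrite (lin_sum fl); apply: eq_bigr => k _.
  by rewrite (linZ fl).
apply: continuous_cvg; first exact: lin_contM.
exact: expmx_cvg.
Qed.

Lemma cvg0_le (V : normedModType R) (u : nat -> V) (r : nat -> R) :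
  (forall p, `|u p| <= r p) -> r @ \oo --> 0 -> u @ \oo --> 0.
Proof.
move=> ur r0; apply: norm_cvg0.
apply: (@squeeze_cvgr _ _ _ _ (fun=> 0) r); last exact: r0; last exact: cvg_cst.
by near=> p; rewrite normr_ge0 ur.
Unshelve. all: by end_near. Qed.

Lemma tri_split (V : zmodType) (G : nat -> nat -> V) p :
  \sum_(0 <= a < p) \sum_(0 <= b < p) G a b =
  \sum_(0 <= j < p) \sum_(0 <= a < j.+1) G a (j - a)%N +
  \sum_(0 <= a < p) \sum_(p - a <= b < p) G a b.
Proof.
have E1 a : \sum_(0 <= b < p) G a b =
    \sum_(0 <= b < p - a) G a b + \sum_(p - a <= b < p) G a b.
  by rewrite -big_cat_nat // leq_subr.
rewrite (eq_bigr _ (fun a _ => E1 a)) big_split /=; congr (_ + _).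
elim: p {E1} => [|p IH]; first by rewrite !big_geq.
rewrite big_nat_recr //= subSnn big_nat1.
rewrite [in RHS]big_nat_recr //=.
have E2 : \sum_(0 <= i < p) \sum_(0 <= b < p.+1 - i) G i b =
   \sum_(0 <= i < p) (\sum_(0 <= b < p - i) G i b + G i (p - i)%N).
  apply: eq_big_nat => a /andP[_ ap].
  by rewrite subSn ?(ltnW ap) // big_nat_recr.
rewrite E2 big_split /= IH [X in _ = _ + X]big_nat_recr //= subnn.
by rewrite addrA.
Qed.

Lemma binom_exp (x y : R) j :
  \sum_(0 <= a < j.+1) (((a`!)%:R^-1 * x ^+ a) * (((j - a)%N`!)%:R^-1 * y ^+ (j - a)%N))
  = (j`!)%:R^-1 * (x + y) ^+ j.
Proof.
rewrite addrC exprDn big_mkord mulr_sumr; apply: eq_bigr => -[a /=]; rewrite ltnS => aj _.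
have f0 : forall n, (n`!)%:R != 0 :> R by move=> n; rewrite pnatr_eq0 -lt0n fact_gt0.
have HC : ('C(j, a))%:R = (j`!)%:R / ((a`!)%:R * ((j - a)%N`!)%:R) :> R.
  by rewrite -(bin_fact aj) !natrM mulfK // mulf_neq0.
rewrite -[_ *+ 'C(j, a)]mulr_natr HC; field.
by rewrite !f0.
Qed.

Definition sexp (p : nat) (x : R) := \sum_(0 <= k < p) ((k`!)%:R^-1 * x ^+ k).

Lemma sexp_cvg x : (fun p => sexp p x) @ \oo --> expR x.
Proof.
have -> : (fun p => sexp p x) = series (exp_coeff x).
  apply: funext => p; rewrite /sexp /series /=; apply: eq_bigr => k _.
  by rewrite /exp_coeff /= mulrC.
exact: (is_cvg_series_exp_coeff x).
Qed.

End B.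
Lemma zmod_id (V : zmodType) (a b c d : V) : a - d = (a - b - (c - d)) + (b - d) + (c - d).
Proof. by rewrite -addrA (addrC (b - d)) addrA subrK addrA subrK. Qed.

Section C.
Variable R : realType.

Lemma bilinB1 (U W V : lmodType R) (f : U -> W -> V) :
  (forall Q, lin (f^~ Q)) -> forall P P' Q, f P Q - f P' Q = f (P - P') Q.
Proof. by move=> f1 P P' Q; rewrite (linB (f1 Q)). Qed.

Lemma cvg_sub0 (V : normedModType R) (u : nat -> V) l :
  u @ \oo --> l -> (fun p => `|u p - l|) @ \oo --> (0:R).
Proof.
move=> ul; apply/norm_cvg0P.
have := cvgB ul (cvg_cst l); rewrite subrr; exact.
Qed.

Lemma cauchy_prod N1 N2 (V : normedModType R) (Phi : 'M[R]_N1 -> 'M[R]_N2 -> V)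
  (A : 'M[R]_N1) (B : 'M[R]_N2) :
  (forall Q, lin (Phi^~ Q)) -> (forall P, lin (Phi P)) ->
  (fun p => \sum_(0 <= j < p) \sum_(0 <= a < j.+1)
      Phi ((a`!)%:R^-1 *: A ^+ a) (((j - a)%N`!)%:R^-1 *: B ^+ (j - a)%N))
   @ \oo --> Phi (expmx A) (expmx B).
Proof.
move=> f1 f2.
have [K [K0 HK]] := bilin_bound f1 f2.
pose uA a := (a`!)%:R^-1 *: A ^+ a.
pose uB a := (a`!)%:R^-1 *: B ^+ a.
pose SA p := \sum_(0 <= k < p) uA k.
pose SB p := \sum_(0 <= k < p) uB k.
pose al := N1%:R * `|A|.
pose be := N2%:R * `|B|.
have al0 : 0 <= al by rewrite mulr_ge0.
have be0 : 0 <= be by rewrite mulr_ge0.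
have nA a : `|uA a| <= (a`!)%:R^-1 * al ^+ a.
  rewrite /uA normrZ ger0_norm ?invr_ge0 //; apply: ler_wpM2l; first by rewrite invr_ge0.
  exact: pow_norm.
have nB a : `|uB a| <= (a`!)%:R^-1 * be ^+ a.
  rewrite /uB normrZ ger0_norm ?invr_ge0 //; apply: ler_wpM2l; first by rewrite invr_ge0.
  exact: pow_norm.
pose Sq p := Phi (SA p) (SB p).
pose Rest p := \sum_(0 <= a < p) \sum_(p - a <= b < p) Phi (uA a) (uB b).
have Htri p : \sum_(0 <= j < p) \sum_(0 <= a < j.+1)
      Phi ((a`!)%:R^-1 *: A ^+ a) (((j - a)%N`!)%:R^-1 *: B ^+ (j - a)%N)
    = Sq p - Rest p.
  have -> : Sq p = \sum_(0 <= a < p) \sum_(0 <= b < p) Phi (uA a) (uB b).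
    rewrite /Sq /SA (lin_sum (f1 _)); apply: eq_bigr => a _.
    by rewrite /SB (lin_sum (f2 _)).
  by rewrite tri_split addrK.
have -> : (fun p => \sum_(0 <= j < p) \sum_(0 <= a < j.+1)
      Phi ((a`!)%:R^-1 *: A ^+ a) (((j - a)%N`!)%:R^-1 *: B ^+ (j - a)%N))
    = (fun p => Sq p - Rest p) by apply: funext => p; exact: Htri.
rewrite -[Phi _ _]subr0; apply: cvgB.
- apply: cvg_zero; apply: (cvg0_le (r := fun p => K * (`|SA p - expmx A| * `|SB p - expmx B|
     + `|SA p - expmx A| * `|expmx B| + `|expmx A| * `|SB p - expmx B|))).
    move=> p; have -> : (Sq - cst (Phi (expmx A) (expmx B))) p = Phi (SA p) (SB p) - Phi (expmx A) (expmx B) by [].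
    rewrite (zmod_id _ (Phi (SA p) (expmx B)) (Phi (expmx A) (SB p))).
    rewrite -!(linB (f2 _)) !(bilinB1 f1).
    rewrite !mulrDr; apply: le_trans (ler_normD _ _) _; apply: lerD; last first.
      by rewrite mulrA; exact: HK.
    apply: le_trans (ler_normD _ _) _; apply: lerD; rewrite mulrA; exact: HK.
  have dA := cvg_sub0 (expmx_cvg (A:=A)).
  have dB := cvg_sub0 (expmx_cvg (A:=B)).
  have := cvgM (cvg_cst K) (cvgD (cvgD (cvgM dA dB) (cvgM dA (cvg_cst `|expmx B|))) (cvgM (cvg_cst `|expmx A|) dB)).
  rewrite !(mul0r, mulr0, addr0); exact.
pose g a := (a`!)%:R^-1 * al ^+ a.
pose h a := (a`!)%:R^-1 * be ^+ a.
apply: (cvg0_le (r := fun p => K * (sexp p al * sexp p be - sexp p (al + be)))).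
  move=> p.
  have HR := tri_split (fun a b => g a * h b) p.
  have HSq : sexp p al * sexp p be = \sum_(0 <= a < p) \sum_(0 <= b < p) g a * h b.
    rewrite /sexp mulr_suml; apply: eq_bigr => a _; by rewrite mulr_sumr.
  have HTr : sexp p (al + be) = \sum_(0 <= j < p) \sum_(0 <= a < j.+1) g a * h (j - a)%N.
    by rewrite /sexp; apply: eq_bigr => j _; rewrite binom_exp.
  rewrite HSq HTr HR addrAC subrr add0r mulr_sumr.
  apply: le_trans (ler_norm_sum _ _ _) _; apply: ler_sum => a _.
  rewrite mulr_sumr; apply: le_trans (ler_norm_sum _ _ _) _; apply: ler_sum => b _.
  apply: le_trans (HK _ _) _; rewrite -mulrA; apply: ler_wpM2l => //.
  by apply: ler_pM.
have := cvgM (cvg_cst K) (cvgB (cvgM (sexp_cvg (x:=al)) (sexp_cvg (x:=be))) (sexp_cvg (x:=al + be))).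
rewrite -expRD subrr mulr0; exact.
Qed.
End C.
Section Bil.
Variable R : realType.
Variables (a b c : nat) (f : 'rV[R]_a -> 'rV[R]_b -> 'rV[R]_c).
Hypothesis Hf : bilinear_map f.
Lemma bil1 w : lin (f^~ w). Proof. by move=> x u v; case: Hf => H _; exact: H. Qed.
Lemma bil2 u : lin (f u). Proof. by move=> x v w; case: Hf => _ H; exact: H. Qed.
Lemma bl0 w : f 0 w = 0. Proof. exact: (lin0 (bil1 w)). Qed.
Lemma br0 u : f u 0 = 0. Proof. exact: (lin0 (bil2 u)). Qed.
Lemma blN u w : f (- u) w = - f u w. Proof. exact: (linN (bil1 w)). Qed.
Lemma brN u w : f u (- w) = - f u w. Proof. exact: (linN (bil2 u)). Qed.
Lemma blD u u' w : f (u + u') w = f u w + f u' w. Proof. exact: (linD (bil1 w)). Qed.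
Lemma brD u w w' : f u (w + w') = f u w + f u w'. Proof. exact: (linD (bil2 u)). Qed.
Lemma blB u u' w : f (u - u') w = f u w - f u' w. Proof. exact: (linB (bil1 w)). Qed.
Lemma brB u w w' : f u (w - w') = f u w - f u w'. Proof. exact: (linB (bil2 u)). Qed.
Lemma blZ x u w : f (x *: u) w = x *: f u w. Proof. exact: (linZ (bil1 w)). Qed.
Lemma brZ x u w : f u (x *: w) = x *: f u w. Proof. exact: (linZ (bil2 u)). Qed.
End Bil.

Lemma mx_rowE (R : realType) N M (P Q : 'M[R]_(N, M)) :
  (forall u : 'rV_N, u *m P = u *m Q) -> P = Q.
Proof. by move=> H; apply/row_matrixP => i; rewrite !rowE H. Qed.

Section G.
Variables (R : realType) (n m k : nat).
Variables (br : 'rV[R]_n -> 'rV[R]_n -> 'rV[R]_n)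
  (act : 'rV[R]_n -> 'rV[R]_m -> 'rV[R]_m)
  (beta : 'rV[R]_m -> 'rV[R]_m -> 'rV[R]_k).
Hypothesis Hbr : bilinear_map br.
Hypothesis Hact : bilinear_map act.
Hypothesis Hbeta : bilinear_map beta.
Local Notation gb := (gbr br act beta).
Local Notation gt := (@gtriple R n m k).

Lemma gzK z v x : gz (gt z v x) = z. Proof. by rewrite /gz /gtriple row_mxKl. Qed.
Lemma gVK z v x : gV (gt z v x) = v. Proof. by rewrite /gV /gtriple row_mxKr row_mxKl. Qed.
Lemma glK z v x : gl (gt z v x) = x. Proof. by rewrite /gl /gtriple !row_mxKr. Qed.
Lemma gt_eta X : gt (gz X) (gV X) (gl X) = X.
Proof. by rewrite /gtriple /gV /gl hsubmxK /gz hsubmxK. Qed.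
Lemma gt_inj z v x z' v' x' : gt z v x = gt z' v' x' -> [/\ z = z', v = v' & x = x'].
Proof. by move=> /eq_row_mx [-> /eq_row_mx [-> ->]]. Qed.
Lemma gt0 : gt 0 0 0 = 0. Proof. by rewrite /gtriple !row_mx0. Qed.
Lemma gt_lin (a : R) z v x z' v' x' :
  gt (a *: z + z') (a *: v + v') (a *: x + x') = a *: gt z v x + gt z' v' x'.
Proof. by rewrite /gtriple !scale_row_mx !add_row_mx. Qed.
Lemma gz_lin : lin (@gz R n m k).
Proof. by move=> a Y Y'; rewrite -{1}[Y]gt_eta -{1}[Y']gt_eta -gt_lin gzK. Qed.
Lemma gV_lin : lin (@gV R n m k).
Proof. by move=> a Y Y'; rewrite -{1}[Y]gt_eta -{1}[Y']gt_eta -gt_lin gVK. Qed.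
Lemma gl_lin : lin (@gl R n m k).
Proof. by move=> a Y Y'; rewrite -{1}[Y]gt_eta -{1}[Y']gt_eta -gt_lin glK. Qed.

Lemma gbrE z v x z' v' x' :
  gb (gt z v x) (gt z' v' x') = gt (beta v v') (act x v' - act x' v) (br x x').
Proof. by rewrite /gbr !gVK !glK. Qed.

Lemma gbr_lin2 X : lin (gb X).
Proof.
move=> a Y Y'; rewrite /gbr (gV_lin a Y Y') (gl_lin a Y Y') -gt_lin.
rewrite (brD Hbeta) (brZ Hbeta) (brD Hact) (brZ Hact) (blD Hact) (blZ Hact).
rewrite (brD Hbr) (brZ Hbr); congr gtriple.
by rewrite scalerBr opprD addrACA.
Qed.

Lemma gbr_lin1 Y : lin (gb^~ Y).
Proof.
move=> a X X'; rewrite /gbr (gV_lin a X X') (gl_lin a X X') -gt_lin.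
rewrite (blD Hbeta) (blZ Hbeta) (brD Hact) (brZ Hact) (blD Hact) (blZ Hact).
rewrite (blD Hbr) (blZ Hbr); congr gtriple.
by rewrite scalerBr opprD addrACA.
Qed.

Lemma adm_kill : admissible br act beta ->
  forall X0, (forall Y, gb X0 (gb X0 Y) = 0) -> forall Y, gb X0 Y = 0.
Proof.
move=> [C [Ccl Ccv Cnl Csp Cinv]] X0 HX0.
set M := ad gb X0.
have HM Y : Y *m M = gb X0 Y by rewrite /M /ad (lin1E (gbr_lin2 X0)).
have MM : M *m M = 0.
  by apply/row_matrixP => i; rewrite row0 !rowE mulmxA !HM HX0.
have Mt t : ad gb (t *: X0) = t *: M.
  apply: mx_rowE => u; rewrite (lin1E (gbr_lin2 _)) -scalemxAr HM.
  by rewrite (linZ (gbr_lin1 u)).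
have Et t : expmx (t *: M) = 1%:M + t *: M.
  rewrite /expmx; apply: (lim_near_cst (@norm_hausdorff _ _)); near=> p.
  have Hp : (2 <= p)%N by near: p; exists 2%N.
  rewrite -(subnK Hp) addn2.
  rewrite big_nat_recl // big_nat_recl // big1 ?addr0.
    by rewrite fact0 (_ : 1`! = 1)%N // mulr1n invr1 !scale1r expr0 expr1.
  move=> i _; rewrite -addn2 exprD expr2.
  rewrite -!mulmxE -scalemxAl -scalemxAr -[M *m (t *: M)]scalemxAr MM !scaler0.
  by rewrite ?mulmx0 ?scaler0.
have inn t : Inn gb (1%:M *m expmx (ad gb (t *: X0))).
  by apply: InnExp; exact: Inn1.
have HC Y : C Y -> gb X0 Y = 0.
  move=> CY; apply: (Cnl Y) => t.
  have := Cinv _ Y (inn t) CY.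
  by rewrite mul1mx Mt Et mulmxDr mulmx1 -scalemxAr HM.
move=> Y; have [s [Hs ->]] := Csp Y.
rewrite (lin_sum (gbr_lin2 X0)) big_seq big1 // => p ps.
by rewrite (linZ (gbr_lin2 X0)) HC ?scaler0 //; exact: Hs.
Unshelve. all: by end_near. Qed.

End G.
Section M.
Variables (R : realType) (n m k : nat).
Variables (br : 'rV[R]_n -> 'rV[R]_n -> 'rV[R]_n)
  (act : 'rV[R]_n -> 'rV[R]_m -> 'rV[R]_m)
  (beta : 'rV[R]_m -> 'rV[R]_m -> 'rV[R]_k).
Hypothesis Hbr : bilinear_map br.
Hypothesis Halt : forall x, br x x = 0.
Hypothesis Hact : bilinear_map act.
Hypothesis Hmod : forall x y v, act (br x y) v = act x (act y v) - act y (act x v).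
Hypothesis Hbeta : bilinear_map beta.
Hypothesis Hskew : forall v w, beta v w = - beta w v.
Hypothesis Hinvar : forall x v w, beta (act x v) w + beta v (act x w) = 0.
Local Notation gb := (gbr br act beta).
Local Notation gt := (@gtriple R n m k).

Definition phi v x := beta v (- act x v).

Lemma W_char Cz x : W_l br act beta Cz x <-> forall v, Cz (phi v x).
Proof.
have E v : gb (gt 0 v 0) (gb (gt 0 v 0) (gt 0 0 x)) = gt (phi v x) 0 0.
  rewrite [gb _ (gt 0 0 x)]gbrE (br0 Hbeta) (bl0 Hact) (bl0 Hbr) sub0r gbrE.
  by rewrite !(bl0 Hact) subrr (bl0 Hbr).
split => [H v | H v].
  by have [c Cc] := H v; rewrite E => /gt_inj [-> _ _].
by exists (phi v x) => //; rewrite E.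
Qed.

Lemma phi_lin v : lin (phi v).
Proof.
move=> a x y; rewrite /phi (bil1 Hact v a x y) opprD -scalerN.
exact: (bil2 Hbeta v).
Qed.

Lemma two_eq0 (b : 'rV[R]_k) : b + b = 0 -> b = 0.
Proof.
move=> H; have : (2%:R : R) *: b = 0 by rewrite scaler_nat mulr2n.
by move/eqP; rewrite scaler_eq0 pnatr_eq0 /= => /eqP.
Qed.

Lemma pointed_main : admissible br act beta -> faithful act ->
  (forall I, is_ideal br I -> exists J, [/\ is_ideal br J,
      (forall u, I u -> J u -> u = 0) &
      (forall u, exists a b, [/\ I a, J b & u = a + b])]) ->
  forall x, (forall v, beta v (act x v) = 0) -> x = 0.
Proof.
move=> Hadm Hfaith Hcompl x Hx.
have Rad_kill u : (forall w, beta w u = 0) -> forall y, act y u = 0.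
  move=> Hu y.
  have HX Y : gb (gt 0 u 0) Y = gt 0 (- act (gl Y) u) 0.
    rewrite -[in LHS](gt_eta Y) gbrE Hskew Hu oppr0 (bl0 Hact) sub0r (bl0 Hbr).
    by [].
  have K := adm_kill Hbr Hact Hbeta Hadm (X0 := gt 0 u 0).
  have HH : forall Y, gb (gt 0 u 0) (gb (gt 0 u 0) Y) = 0.
    by move=> Y; rewrite !HX glK (bl0 Hact) oppr0 gt0.
  have := K HH (gt 0 0 y); rewrite HX glK -gt0 => /gt_inj [_ /eqP].
  by rewrite oppr_eq0 => /eqP.
have HxR v w : beta w (act x v) = 0.
  have e1 := Hx (v + w).
  rewrite (brD Hact) (blD Hbeta) !(brD Hbeta) Hx Hx add0r addr0 in e1.
  have e2 : beta v (act x w) = beta w (act x v).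
    by move: (Hinvar x v w); rewrite (Hskew (act x v) w) addrC => /eqP; rewrite subr_eq0 => /eqP.
  rewrite e2 in e1; exact: two_eq0 e1.
pose A y := forall v w, beta w (act y v) = 0.
have AI : is_ideal br A.
  split; [split|].
  - by move=> v w; rewrite (bl0 Hact) (br0 Hbeta).
  - by move=> u u' Hu Hu' v w; rewrite (blD Hact) (brD Hbeta) Hu Hu' addr0.
  - by move=> a u Hu v w; rewrite (blZ Hact) (brZ Hbeta) Hu scaler0.
  - move=> z y Hy v w; rewrite Hmod (Rad_kill _ (Hy v)) sub0r (brN Hbeta) Hy.
    by rewrite oppr0.
have [J [HJ HAJ Hdec]] := Hcompl A AI.
have Ax : A x := HxR.
have central y : br x y = 0.
  have [a [b [Aa Jb ->]]] := Hdec y.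
  rewrite (brD Hbr).
  have -> : br x a = 0.
    apply: Hfaith => v; rewrite Hmod (Rad_kill _ (Aa v)) (Rad_kill _ (Ax v)).
    by rewrite subr0.
  have -> : br x b = 0.
    apply: HAJ; last by case: HJ => _; apply.
    have anti : br x b = - br b x.
      have := Halt (x + b); rewrite (blD Hbr) !(brD Hbr) Halt Halt add0r addr0.
      by move/eqP; rewrite addr_eq0 => /eqP.
    rewrite anti => v w; rewrite (blN Hact) (brN Hbeta).
    by case: AI => _ AI2; rewrite (AI2 b x Ax) oppr0.
  by rewrite addr0.
have HX Y : gb (gt 0 0 x) Y = gt 0 (act x (gV Y)) 0.
  rewrite -[in LHS](gt_eta Y) gbrE (bl0 Hbeta) (br0 Hact) subr0 central.
  by [].
have K := adm_kill Hbr Hact Hbeta Hadm (X0 := gt 0 0 x).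
have HH : forall Y, gb (gt 0 0 x) (gb (gt 0 0 x) Y) = 0.
  by move=> Y; rewrite !HX gVK (Rad_kill _ (Ax _)) gt0.
apply: Hfaith => w.
by have := K HH (gt 0 w 0); rewrite HX gVK -gt0 => /gt_inj [_ ->].
Qed.


End M.
Section ExpInv.
Variable R : realType.

Lemma binC (j a : nat) : (a <= j)%N ->
  (j`!)%:R^-1 * ('C(j, a))%:R = (a`!)%:R^-1 * ((j - a)%N`!)%:R^-1 :> R.
Proof.
move=> aj.
have f0 : forall n, (n`!)%:R != 0 :> R by move=> n; rewrite pnatr_eq0 -lt0n fact_gt0.
rewrite -(bin_fact aj) !natrM; field.
by rewrite !f0 pnatr_eq0 -lt0n bin_gt0 aj.
Qed.

Lemma exprN_scale N (A : 'M[R]_N) b : (- A) ^+ b = ((-1) ^+ b : R) *: A ^+ b.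
Proof.
elim: b => [|b IH]; first by rewrite !expr0 scale1r.
by rewrite !exprSr IH -!mulmxE -scalemxAl mulmxN scalerN -scaleNr mulrN1.
Qed.

Lemma expmxK N (A : 'M[R]_N) : expmx A *m expmx (- A) = 1%:M.
Proof.
apply: mx_rowE => u; rewrite mulmxA mulmx1.
pose Phi (P Q : 'M[R]_N) := u *m P *m Q.
have f1 : forall Q, lin (Phi^~ Q).
  by move=> Q a P P'; rewrite /Phi mulmxDr -scalemxAr mulmxDl -scalemxAl.
have f2 : forall P, lin (Phi P).
  by move=> P a Q Q'; rewrite /Phi mulmxDr -scalemxAr.
have H := cauchy_prod (A := A) (B := - A) f1 f2.
have T a b : Phi ((a`!)%:R^-1 *: A ^+ a) ((b`!)%:R^-1 *: (- A) ^+ b) =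
    (((a`!)%:R^-1 * 1 ^+ a) * ((b`!)%:R^-1 * (-1) ^+ b)) *: (u *m A ^+ (a + b)).
  rewrite exprN_scale /Phi -!scalemxAr -scalemxAl !scalerA -mulmxA mulmxE -exprD.
  by congr (_ *: _); rewrite expr1n; ring.
rewrite -[LHS]/(Phi (expmx A) (expmx (- A))) -(cvg_lim (@norm_hausdorff _ _) H).
apply: (lim_near_cst (@norm_hausdorff _ _)); near=> p.
have p0 : (0 < p)%N by near: p; exists 1%N.
rewrite -(prednK p0) big_nat_recl // [X in _ + X]big1 ?addr0.
  by rewrite big_nat1 T expr0 mulmx1 fact0 /= invr1 !mul1r scale1r.
move=> j _.
under eq_bigr => a _ do rewrite T.
rewrite (@eq_big_nat _ _ _ 0 j.+2 _ (fun a => (((a`!)%:R^-1 * 1 ^+ a) * (((j.+1 - a)%N`!)%:R^-1 * (-1) ^+ (j.+1 - a)%N)) *: (u *m A ^+ j.+1))); last first.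
  by move=> a /andP[_ aj]; rewrite subnKC.
by rewrite -scaler_suml binom_exp subrr expr0n /= mulr0 scale0r.
Unshelve. all: by end_near. Qed.

End ExpInv.
Lemma mulE (R : realType) N (A B : 'M[R]_N) : A * B = A *m B.
Proof. by []. Qed.

Lemma pascal (R : realType) (V : lmodType R) (G : nat -> V) j :
  \sum_(0 <= a < j.+2) ('C(j.+1, a))%:R *: G a =
  \sum_(0 <= a < j.+1) ('C(j, a))%:R *: G a + \sum_(0 <= a < j.+1) ('C(j, a))%:R *: G a.+1.
Proof.
rewrite big_nat_recl // bin0.
under eq_bigr do rewrite binS natrD scalerDl.
rewrite big_split /=.
rewrite [X in _ + (X + _)]big_nat_recr //= (bin_small (ltnSn j)) scale0r addr0.
by rewrite [in RHS]big_nat_recl // !bin0 addrA.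
Qed.

Section M2.
Variables (R : realType) (n m k : nat).
Variables (br : 'rV[R]_n -> 'rV[R]_n -> 'rV[R]_n)
  (act : 'rV[R]_n -> 'rV[R]_m -> 'rV[R]_m)
  (beta : 'rV[R]_m -> 'rV[R]_m -> 'rV[R]_k).
Hypothesis Hbr : bilinear_map br.
Hypothesis Hact : bilinear_map act.
Hypothesis Hmod : forall x y v, act (br x y) v = act x (act y v) - act y (act x v).
Hypothesis Hbeta : bilinear_map beta.
Hypothesis Hinvar : forall x v w, beta (act x v) w + beta v (act x w) = 0.

Lemma hB y u : u *m lin1_mx (act y) = act y u.
Proof. exact: (lin1E (bil2 Hact y)). Qed.
Lemma hA y z : z *m ad br y = br y z.
Proof. exact: (lin1E (bil2 Hbr y)). Qed.

Lemma Dform y x j v : act (x *m ad br y ^+ j) v =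
  \sum_(0 <= a < j.+1) ('C(j, a))%:R *:
     (act x (v *m (- lin1_mx (act y)) ^+ a) *m (lin1_mx (act y)) ^+ (j - a)%N).
Proof.
set Bm := lin1_mx (act y).
elim: j v => [|j IH] v.
  by rewrite big_nat1 !expr0 !mulmx1 bin0 scale1r.
rewrite exprSr mulmxA hA Hmod -!(hB y) !IH.
pose G a := act x (v *m (- Bm) ^+ a) *m Bm ^+ (j.+1 - a)%N.
rewrite (pascal G) mulmx_suml -/Bm.
have E1 : \sum_(0 <= i < j.+1) ('C(j, i))%:R *: (act x (v *m (- Bm) ^+ i) *m Bm ^+ (j - i)%N) *m Bm
    = \sum_(0 <= a < j.+1) ('C(j, a))%:R *: G a.
  apply: eq_big_nat => a /andP[_ aj].
  by rewrite -scalemxAl -mulmxA /G subSn // exprSr mulE.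
have E2 : - \sum_(0 <= a < j.+1) ('C(j, a))%:R *:
     (act x (v *m Bm *m (- Bm) ^+ a) *m Bm ^+ (j - a)%N)
    = \sum_(0 <= a < j.+1) ('C(j, a))%:R *: G a.+1.
  rewrite -sumrN; apply: eq_bigr => a _; rewrite /G subSS -scalerN; congr (_ *: _).
  by rewrite exprS mulE mulmxA mulmxN mulNmx (brN Hact) mulNmx ?opprK.
by rewrite E1 E2.
Qed.

Lemma act_exp y x v : act (x *m expmx (ad br y)) v =
  act x (v *m expmx (- lin1_mx (act y))) *m expmx (lin1_mx (act y)).
Proof.
set Bm := lin1_mx (act y).
pose f (P : 'M[R]_n) := act (x *m P) v.
have fl : lin f by move=> a P Q; rewrite /f mulmxDr -scalemxAr; exact: (bil1 Hact v).
have L1 := expmx_lin (A := ad br y) fl.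
pose Phi (P Q : 'M[R]_m) := act x (v *m P) *m Q.
have f1 : forall Q, lin (Phi^~ Q).
  move=> Q a P P'; rewrite /Phi mulmxDr -scalemxAr (bil2 Hact x).
  by rewrite mulmxDl -scalemxAl.
have f2 : forall P, lin (Phi P).
  by move=> P a Q Q'; rewrite /Phi mulmxDr -scalemxAr.
have L2 := cauchy_prod (A := - Bm) (B := Bm) f1 f2.
have E : (fun p => \sum_(0 <= k < p) (k`!)%:R^-1 *: f (ad br y ^+ k)) =
   (fun p => \sum_(0 <= j < p) \sum_(0 <= a < j.+1)
      Phi ((a`!)%:R^-1 *: (- Bm) ^+ a) (((j - a)%N`!)%:R^-1 *: Bm ^+ (j - a)%N)).
  apply: funext => p; apply: eq_bigr => j _.
  rewrite /f Dform scaler_sumr; apply: eq_big_nat => a /andP[_ aj].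
  rewrite /Phi -!scalemxAr (linZ (bil2 Hact x)) -scalemxAl !scalerA; congr (_ *: _).
  by rewrite binC // mulrC.
rewrite E in L1.
rewrite -[LHS]/(f (expmx (ad br y))) -[RHS]/(Phi (expmx (- Bm)) (expmx Bm)).
by rewrite -(cvg_lim (@norm_hausdorff _ _) L1) -(cvg_lim (@norm_hausdorff _ _) L2).
Qed.

Lemma beta_exp y u w : beta (u *m expmx (- lin1_mx (act y))) w =
  beta u (w *m expmx (lin1_mx (act y))).
Proof.
set Bm := lin1_mx (act y).
pose f1 (P : 'M[R]_m) := beta (u *m P) w.
pose f2 (P : 'M[R]_m) := beta u (w *m P).
have l1 : lin f1 by move=> a P Q; rewrite /f1 mulmxDr -scalemxAr; exact: (bil1 Hbeta w).
have l2 : lin f2 by move=> a P Q; rewrite /f2 mulmxDr -scalemxAr; exact: (bil2 Hbeta u).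
have L1 := expmx_lin (A := - Bm) l1.
have L2 := expmx_lin (A := Bm) l2.
have T j : f1 ((- Bm) ^+ j) = f2 (Bm ^+ j).
  rewrite /f1 /f2; elim: j w {L1 L2 f1 f2 l1 l2} => [|j IH] w.
    by rewrite !expr0 !mulmx1.
  rewrite exprSr -[(- Bm) ^+ j * - Bm]/((- Bm) ^+ j *m - Bm) mulmxA mulmxN (hB y) (blN Hbeta).
  have -> : - beta (act y (u *m (- Bm) ^+ j)) w = beta (u *m (- Bm) ^+ j) (act y w).
    by apply/eqP; rewrite eq_sym -addr_eq0 addrC Hinvar.
  by rewrite -(hB y) IH -mulmxA exprS.
have E : (fun p => \sum_(0 <= k < p) (k`!)%:R^-1 *: f1 ((- Bm) ^+ k)) =
   (fun p => \sum_(0 <= k < p) (k`!)%:R^-1 *: f2 (Bm ^+ k)).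
  by apply: funext => p; apply: eq_bigr => j _; rewrite T.
rewrite E in L1.
rewrite -[LHS]/(f1 _) -[RHS]/(f2 _).
by rewrite -(cvg_lim (@norm_hausdorff _ _) L1) -(cvg_lim (@norm_hausdorff _ _) L2).
Qed.

Lemma ad_neg y : ad br (- y) = - ad br y.
Proof. by apply: mx_rowE => u; rewrite mulmxN !hA (blN Hbr). Qed.

End M2.
Theorem lemma3p16 (R : realType) (n m k : nat)
  (br : 'rV[R]_n -> 'rV[R]_n -> 'rV[R]_n)
  (act : 'rV[R]_n -> 'rV[R]_m -> 'rV[R]_m)
  (beta : 'rV[R]_m -> 'rV[R]_m -> 'rV[R]_k) :
  reductive br ->
  is_lie_module br act ->
  is_invariant_skew act beta ->
  admissible br act beta ->
  faithful act ->
  forall Cz : set 'rV[R]_k,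
    convex_cone Cz -> pointed_cone Cz -> closed Cz ->
    let W := W_l br act beta Cz in
    [/\ convex_cone W, pointed_cone W, closed W & Inn_invariant br W].
Proof.
move=> [[Hbr Halt Hjac] Hcompl] [Hact Hmod] [Hbeta Hskew Hinvar] Hadm Hfaith
  Cz [Cz0 CzD CzZ] Cpt Ccl W.
have Wc x : W x <-> forall v, Cz (phi act beta v x) := W_char Hbr Hact Hbeta Cz x.
have pl v := phi_lin Hact Hbeta v.
have step x y : W x -> W (x *m expmx (ad br y)).
  move=> /Wc Hx; apply/Wc => v.
  rewrite /phi (act_exp Hbr Hact Hmod) -mulNmx -(beta_exp Hact Hbeta Hinvar).
  exact: Hx.
split.
- split.
  + by apply/Wc => v; rewrite /phi (bl0 Hact) oppr0 (br0 Hbeta).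
  + move=> u w /Wc Hu /Wc Hw; apply/Wc => v; rewrite (linD (pl v)); exact: CzD.
  + move=> a u a0 /Wc Hu; apply/Wc => v; rewrite (linZ (pl v)); exact: CzZ.
- move=> x /Wc Hx /Wc Hnx.
  apply: (pointed_main Hbr Halt Hact Hmod Hbeta Hskew Hinvar Hadm Hfaith Hcompl) => v.
  have := Cpt _ (Hx v); rewrite -(linN (pl v)) => /(_ (Hnx v)).
  by rewrite /phi (brN Hbeta) => /eqP; rewrite oppr_eq0 => /eqP.
- have -> : W = \bigcap_(v in [set: 'rV[R]_m]) (phi act beta v @^-1` Cz).
    apply/seteqP; split => x.
      by move=> /Wc H v _; exact: H.
    by move=> H; apply/Wc => v; exact: H.
  apply: closed_bigI => v _; apply: preimage_closed => //.
  by move=> x _; exact: (lin_contM (pl v)).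
- move=> g u Hg; elim: Hg u => [|g' y Hg IH|g' y Hg IH] u Wu.
  + by rewrite mulmx1.
  + by rewrite mulmxA; apply: step; exact: IH.
  + have Einv : invmx (expmx (ad br y)) = expmx (ad br (- y)).
      have E1 := expmxK (ad br y); rewrite -(ad_neg Hbr) in E1.
      have [U _] := mulmx1_unit E1.
      by rewrite -[invmx _]mulmx1 -E1 mulmxA mulVmx // mul1mx.
    by rewrite Einv mulmxA; apply: step; exact: IH.
Qed.
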